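(* $Spec_B(A)$ is a topological space whose closed subsets are the sets $\mathcal{V}(b)=\{p\in Spec_B(A)\mid b\leq p\}$ with $b\in B$. Dually, its open subsets are the sets $\mathcal{U}(b)=\{p\in Spec_B(A)\mid b\nleq p\}$ with $b\in B$.
   Context: Let $A$ be a quasi-quantale, i.e. a complete $\bigvee$-semilattice (with bottom $0$ and top $1$) equipped with an associative product $A\times A\to A$ such that $(\bigvee X)a=\bigvee\{xa\mid x\in X\}$ and $a(\bigvee Y)=\bigvee\{ay\mid y\in Y\}$ for all directed subsets $X,Y\subseteq A$ and all $a\in A$. Let $B$ be a subquasi-quantale of $A$, i.e. a sub-$\bigvee$-semilattice of $A$ closed under the product on which these two directed distributive laws hold for all directed $X,Y\subseteq B$ and $a\in B$. Assume moreover that $0,1\in B$ and that $1b\leq b$ and $b1\leq b$ for all $b\in B$. An element $1\neq p\in A$ is prime relative to $B$ if whenever $ab\leq p$ with $a,b\in B$ then $a\leq p$ or $b\leq p$; $Spec_B(A)$ denotes the set of all elements of $A$ that are prime relative to $B$. *)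

(* Defs.v *)
Set Implicit Arguments.

Section QQ.
Variable A : Type.
Variable le : A -> A -> Prop.
Variable sup : (A -> Prop) -> A.
Variable mul : A -> A -> A.

Definition is_sup (X : A -> Prop) (s : A) : Prop :=
  (forall x, X x -> le x s) /\ (forall u, (forall x, X x -> le x u) -> le s u).

Definition directed (X : A -> Prop) : Prop :=
  (exists x, X x) /\
  (forall x y, X x -> X y -> exists z, X z /\ le x z /\ le y z).

Definition bot : A := sup (fun _ => False).
Definition top : A := sup (fun _ => True).

Definition quasi_quantale : Prop :=
  (forall x, le x x) /\
  (forall x y z, le x y -> le y z -> le x z) /\
  (forall x y, le x y -> le y x -> x = y) /\
  (forall X, is_sup X (sup X)) /\
  (forall a b c, mul (mul a b) c = mul a (mul b c)) /\
  (forall X a, directed X ->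
     mul (sup X) a = sup (fun y => exists x, X x /\ y = mul x a)) /\
  (forall Y a, directed Y ->
     mul a (sup Y) = sup (fun z => exists y, Y y /\ z = mul a y)).

Definition subquasi_quantale (B : A -> Prop) : Prop :=
  (forall X, (forall x, X x -> B x) -> B (sup X)) /\
  (forall a b, B a -> B b -> B (mul a b)) /\
  (forall X a, (forall x, X x -> B x) -> directed X -> B a ->
     mul (sup X) a = sup (fun y => exists x, X x /\ y = mul x a)) /\
  (forall Y a, (forall y, Y y -> B y) -> directed Y -> B a ->
     mul a (sup Y) = sup (fun z => exists y, Y y /\ z = mul a y)).

Definition prime_rel (B : A -> Prop) (p : A) : Prop :=
  p <> top /\
  forall a b, B a -> B b -> le (mul a b) p -> le a p \/ le b p.

Definition Spec (B : A -> Prop) : A -> Prop := fun p => prime_rel B p.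

Definition VV (B : A -> Prop) (b : A) : A -> Prop :=
  fun p => Spec B p /\ le b p.

Definition UU (B : A -> Prop) (b : A) : A -> Prop :=
  fun p => Spec B p /\ ~ le b p.

End QQ.

Definition same_set {T : Type} (S S' : T -> Prop) : Prop := forall x, S x <-> S' x.

(* The family is assumed to be closed under extensional equality. *)
Definition closed_sets_topology {T : Type} (X : T -> Prop)
  (C : (T -> Prop) -> Prop) : Prop :=
  (forall S, C S -> forall x, S x -> X x) /\
  C (fun _ => False) /\
  C X /\
  (forall F : (T -> Prop) -> Prop, (forall S, F S -> C S) ->
     C (fun x => X x /\ forall S, F S -> S x)) /\
  (forall S S', C S -> C S' -> C (fun x => S x \/ S' x)).

Definition open_sets_topology {T : Type} (X : T -> Prop)
  (O : (T -> Prop) -> Prop) : Prop :=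
  (forall S, O S -> forall x, S x -> X x) /\
  O (fun _ => False) /\
  O X /\
  (forall F : (T -> Prop) -> Prop, (forall S, F S -> O S) ->
     O (fun x => exists S, F S /\ S x)) /\
  (forall S S', O S -> O S' -> O (fun x => S x /\ S' x)).

(* Main.v *)
Require Import Defs.
From Stdlib Require Import Classical.

Section H.
Variables (A : Type) (le : A -> A -> Prop) (sup : (A -> Prop) -> A) (mul : A -> A -> A) (B : A -> Prop).
Hypothesis HQ : quasi_quantale le sup mul.
Hypothesis HB : subquasi_quantale le sup mul B.
Hypothesis Btop : B (top sup).

Lemma le_top x : le x (top sup).
Proof. destruct HQ as (_&_&_&Hs&_). destruct (Hs (fun _ => True)) as [H _]. apply H; auto. Qed.

Lemma sup_pair b : sup (fun y => y = b \/ y = top sup) = top sup.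
Proof.
  destruct HQ as (_&_&Ha&Hs&_). apply Ha.
  - apply le_top.
  - destruct (Hs (fun y => y = b \/ y = top sup)) as [H _]. apply H; auto.
Qed.

Lemma dir_pair b : directed le (fun y => y = b \/ y = top sup).
Proof.
  split. exists b; auto.
  intros x y _ _. exists (top sup). split; auto. split; apply le_top.
Qed.

Lemma mono_r a b : B a -> B b -> le (mul a b) (mul a (top sup)).
Proof.
  intros Ha Hb. destruct HB as (_&_&_&Hr).
  rewrite <- (sup_pair b). rewrite Hr; auto.
  2: intros y [->| ->]; auto.
  2: apply dir_pair.
  destruct HQ as (_&_&_&Hs&_). eapply (proj1 (Hs _)). exists b; auto.
Qed.

Lemma mono_l a b : B a -> B b -> le (mul a b) (mul (top sup) b).
Proof.
  intros Ha Hb. destruct HB as (_&_&Hl&_).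
  rewrite <- (sup_pair a). rewrite Hl; auto.
  2: intros y [->| ->]; auto.
  2: apply dir_pair.
  destruct HQ as (_&_&_&Hs&_). eapply (proj1 (Hs _)). exists a; auto.
Qed.
End H.

Theorem proposition3p18 (A : Type) (le : A -> A -> Prop)
  (sup : (A -> Prop) -> A) (mul : A -> A -> A) (B : A -> Prop) :
  quasi_quantale le sup mul ->
  subquasi_quantale le sup mul B ->
  B (bot sup) -> B (top sup) ->
  (forall b, B b -> le (mul (top sup) b) b /\ le (mul b (top sup)) b) ->
  closed_sets_topology (Spec le sup mul B)
    (fun S => exists b, B b /\ same_set S (VV le sup mul B b)) /\
  open_sets_topology (Spec le sup mul B)
    (fun S => exists b, B b /\ same_set S (UU le sup mul B b)) /\
  (forall b p, UU le sup mul B b p <-> (Spec le sup mul B p /\ ~ VV le sup mul B b p)).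
Proof.
  intros HQ HB Bbot Btop Hun.
  pose proof HQ as (Hrefl&Htr&Hanti&Hs&_).
  pose proof HB as (Bsup&Bmul&_&_).
  assert (Hab1 : forall a b p, B a -> B b -> le a p -> le (mul a b) p).
  { intros a b p Ha Hb H. eapply Htr. apply (@mono_r A le sup mul B HQ HB Btop); auto.
    eapply Htr. apply (Hun a Ha). exact H. }
  assert (Hab2 : forall a b p, B a -> B b -> le b p -> le (mul a b) p).
  { intros a b p Ha Hb H. eapply Htr. apply (@mono_l A le sup mul B HQ HB Btop); auto.
    eapply Htr. apply (Hun b Hb). exact H. }
  assert (Hbot : forall x, le (bot sup) x).
  { intro x. destruct (Hs (fun _ => False)) as [_ H]. apply H. tauto. }
  assert (Htopp : forall p, Spec le sup mul B p -> ~ le (top sup) p).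
  { intros p [Hp _] H. apply Hp. apply Hanti; auto. apply (@le_top A le sup mul HQ). }
  split; [|split].
  - split; [|split; [|split; [|split]]].
    + intros S [b [_ Hb]] x Sx. apply Hb in Sx. apply Sx.
    + exists (top sup). split; auto. intro x. unfold VV. split; [tauto|].
      intros [H1 H2]. exact (Htopp _ H1 H2).
    + exists (bot sup). split; auto. intro x. unfold VV. split; [intro; split; auto|tauto].
    + intros F HF.
      set (P := fun c => B c /\ exists S, F S /\ same_set S (VV le sup mul B c)).
      exists (sup P). split. { apply Bsup. intros x [? _]; auto. }
      intro x. unfold VV. split.
      * intros [Hx HS]. split; auto. apply (proj2 (Hs P)).
        intros c [Bc [S [FS HSc]]]. exact (proj2 (proj1 (HSc x) (HS S FS))).
      * intros [Hx Hle]. split; auto. intros S FS.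
        destruct (HF S FS) as [c [Bc Hc]]. apply Hc. split; auto.
        eapply Htr; [|exact Hle]. apply (proj1 (Hs P)). split; eauto.
    + intros S S' [a [Ba Ha]] [b [Bb Hb]]. exists (mul a b). split; auto.
      intro x. rewrite (Ha x), (Hb x). unfold VV. split.
      * intros [[Hx H]|[Hx H]]; (split; [exact Hx| first [apply Hab1; auto; fail | apply Hab2; auto]]).
      * intros [Hx H]. destruct (proj2 Hx a b Ba Bb H); auto.
  - split; [|split; [|split; [|split]]].
    + intros S [b [_ Hb]] x Sx. apply Hb in Sx. apply Sx.
    + exists (bot sup). split; auto. intro x. unfold UU. split; [tauto|].
      intros [_ H]. apply H; auto.
    + exists (top sup). split; auto. intro x. unfold UU. split; [intro; split; auto|tauto].
    + intros F HF.
      set (P := fun c => B c /\ exists S, F S /\ same_set S (UU le sup mul B c)).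
      exists (sup P). split. { apply Bsup. intros x [? _]; auto. }
      intro x. unfold UU. split.
      * intros [S [FS Sx]]. destruct (HF S FS) as [c [Bc Hc]].
        apply Hc in Sx. destruct Sx as [Hx Hn]. split; auto.
        intro H. apply Hn. eapply Htr; [|exact H]. apply (proj1 (Hs P)). split; eauto.
      * intros [Hx Hn]. apply NNPP. intro Hno. apply Hn.
        apply (proj2 (Hs P)). intros c [Bc [S [FS HSc]]].
        apply NNPP. intro Hc. apply Hno. exists S. split; auto. apply HSc. split; auto.
    + intros S S' [a [Ba Ha]] [b [Bb Hb]]. exists (mul a b). split; auto.
      intro x. rewrite (Ha x), (Hb x). unfold UU. split.
      * intros [[Hx H1] [_ H2]]. split; auto. intro H.
        destruct (proj2 Hx a b Ba Bb H); auto.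
      * intros [Hx H]. split; split; auto.
  - intros b p. unfold UU, VV. tauto.
Qed.
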